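(* Let $a<b$ be real numbers, let the outcome set be $\Omega=[a,b]$ and the forecast set $\Gamma$ be the set of all probability distribution functions on $[a,b]$, and let the loss be the continuous ranked probability score $$\mathrm{CRPS}(F,y)=\int_a^b (F(u)-H(u-y))^2\,du,$$ where $H(x)=0$ for $x<0$ and $H(x)=1$ for $x\ge0$. Then $\mathrm{CRPS}$ is $\frac{2}{b-a}$-mixable. Moreover, for any $N\ge1$, any probability distribution functions $F_1,\dots,F_N\in\Gamma$ and any probability vector $\mathbf{q}=(q_1,\dots,q_N)$ ($q_i\ge0$, $\sum_i q_i=1$), the function $$F(u)=\frac{1}{2}-\frac{1}{4}\ln\frac{\sum_{i=1}^N q_i e^{-2(F_i(u))^2}}{\sum_{i=1}^N q_i e^{-2(1-F_i(u))^2}},\qquad u\in[a,b],$$ is a probability distribution function and satisfies, for all $y\in[a,b]$, $$e^{-\frac{2}{b-a}\mathrm{CRPS}(F,y)}\ge\sum_{i=1}^N q_i\, e^{-\frac{2}{b-a}\mathrm{CRPS}(F_i,y)}.$$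
   Context: A probability distribution function on $[a,b]$ is a non-decreasing function $F:[a,b]\to[0,1]$ with $F(a)=0$, $F(b)=1$, left-continuous and having a right limit at each point. A loss function $\lambda:\Gamma\times\Omega\to\mathbb{R}$ is $\eta$-mixable ($\eta>0$) if for every $N$, every probability vector $\mathbf{q}=(q_1,\dots,q_N)$ and every $c_1,\dots,c_N\in\Gamma$ there exists $f\in\Gamma$ with $\lambda(f,y)\le-\frac{1}{\eta}\ln\sum_{i=1}^N q_i e^{-\eta\lambda(c_i,y)}$ for all $y\in\Omega$. *)

(* Defs.v *)
From Stdlib Require Import Reals.
From Coquelicot Require Import Coquelicot.
Open Scope R_scope.

Fixpoint rsum (N : nat) (f : nat -> R) : R :=
  match N with
  | O => 0
  | S n => rsum n f + f n
  end.

Definition prob_vec (N : nat) (q : nat -> R) : Prop :=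
  (forall i, (i < N)%nat -> 0 <= q i) /\ rsum N q = 1.

(* probability distribution function on [a,b] (only values on [a,b] matter) *)
Definition is_pdf (a b : R) (F : R -> R) : Prop :=
  (forall u, a <= u <= b -> 0 <= F u <= 1) /\
  (forall u v, a <= u -> u <= v -> v <= b -> F u <= F v) /\
  F a = 0 /\ F b = 1 /\
  (forall x, a < x <= b -> filterlim F (at_left x) (locally (F x))) /\
  (forall x, a <= x < b -> exists l, filterlim F (at_right x) (locally l)).

Definition mixable {G O : Type} (isG : G -> Prop) (isO : O -> Prop)
  (lam : G -> O -> R) (eta : R) : Prop :=
  forall (N : nat) (q : nat -> R) (c : nat -> G),
    prob_vec N q -> (forall i, (i < N)%nat -> isG (c i)) ->
    exists f, isG f /\
      forall y, isO y ->
        lam f y <= - / eta * ln (rsum N (fun i => q i * exp (- eta * lam (c i) y))).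

Definition Heav (x : R) : R := if Rlt_dec x 0 then 0 else 1.

Definition CRPS (a b : R) (F : R -> R) (y : R) : R :=
  RInt (fun u => (F u - Heav (u - y)) ^ 2) a b.

Definition Fmix (N : nat) (q : nat -> R) (Fs : nat -> R -> R) (u : R) : R :=
  / 2 - / 4 * ln (rsum N (fun i => q i * exp (-2 * (Fs i u) ^ 2))
                  / rsum N (fun i => q i * exp (-2 * (1 - Fs i u) ^ 2))).

(* Main.v *)
Require Import Defs.
From Stdlib Require Import Reals Lra Lia Psatz Classical ClassicalEpsilon.
From Coquelicot Require Import Coquelicot.
Open Scope R_scope.

Lemma rsum_ext N f g : (forall i, (i < N)%nat -> f i = g i) -> rsum N f = rsum N g.
Proof. induction N; simpl; intros H; auto. rewrite IHN by (intros; apply H; lia). rewrite H by lia. auto. Qed.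

Lemma rsum_plus N f g : rsum N (fun i => f i + g i) = rsum N f + rsum N g.
Proof. induction N; simpl; [lra|]. rewrite IHN. lra. Qed.

Lemma rsum_scal N c f : rsum N (fun i => c * f i) = c * rsum N f.
Proof. induction N; simpl; [lra|]. rewrite IHN. lra. Qed.

Lemma rsum_le N f g : (forall i, (i < N)%nat -> f i <= g i) -> rsum N f <= rsum N g.
Proof. induction N; simpl; intros H; [lra|]. assert (f N <= g N) by (apply H; lia).
 assert (rsum N f <= rsum N g) by (apply IHN; intros; apply H; lia). lra. Qed.

Lemma rsum_nonneg N f : (forall i, (i < N)%nat -> 0 <= f i) -> 0 <= rsum N f.
Proof. intros H. replace 0 with (rsum N (fun _ => 0)). apply rsum_le; auto.
 clear H; induction N; simpl; auto; lra. Qed.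

Lemma rsum_pos N q w : (forall i, (i < N)%nat -> 0 <= q i) -> (forall i, (i < N)%nat -> 0 < w i) ->
  0 < rsum N q -> 0 < rsum N (fun i => q i * w i).
Proof. induction N; simpl; intros Hq Hw Hs; [lra|].
 assert (0 <= rsum N q) by (apply rsum_nonneg; intros; apply Hq; lia).
 assert (0 <= q N) by (apply Hq; lia). assert (0 < w N) by (apply Hw; lia).
 assert (0 <= rsum N (fun i => q i * w i)) by (apply rsum_nonneg; intros; apply Rmult_le_pos; [apply Hq; lia| left; apply Hw; lia]).
 destruct (Rle_lt_or_eq_dec _ _ H) as [h|h].
 - assert (0 < rsum N (fun i => q i * w i)) by (apply IHN; [intros; apply Hq; lia|intros; apply Hw; lia|auto]).
   assert (0 <= q N * w N) by (apply Rmult_le_pos; lra). lra.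
 - assert (0 < q N * w N) by (apply Rmult_lt_0_compat; lra). lra.
Qed.

Lemma jensen_exp N p z : (forall i, (i < N)%nat -> 0 <= p i) -> rsum N p = 1 ->
  exp (rsum N (fun i => p i * z i)) <= rsum N (fun i => p i * exp (z i)).
Proof. intros Hp H1. set (c := rsum N (fun i => p i * z i)).
 assert (rsum N (fun i => p i * (exp c * (1 + (z i - c)))) <= rsum N (fun i => p i * exp (z i))).
 { apply rsum_le; intros i Hi. apply Rmult_le_compat_l; [auto|].
   replace (exp (z i)) with (exp c * exp (z i - c)) by (rewrite <- exp_plus; f_equal; ring).
   apply Rmult_le_compat_l; [left; apply exp_pos| apply exp_ineq1_le]. }
 replace (rsum N (fun i => p i * (exp c * (1 + (z i - c))))) with
  (exp c * (rsum N p + rsum N (fun i => p i * z i) - c * rsum N p)) in H.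
 { rewrite H1 in H. fold c in H. lra. }
 rewrite (rsum_ext N (fun i => p i * (exp c * (1 + (z i - c)))) (fun i => (exp c * p i + exp c * (p i * z i)) + (-(exp c * c)) * p i)) by (intros; ring).
 rewrite !rsum_plus, !rsum_scal. ring.
Qed.

Definition Wf p s := 1 - p + p * exp s.
Definition Df p s := s^2/8 - ln (Wf p s) + p * s.
Definition D1f p s := s/4 - p * exp s / Wf p s + p.
Definition D2f p s := /4 - p * (1 - p) * exp s / (Wf p s)^2.
Lemma W_pos p (hp : 0 <= p <= 1) s : 0 < Wf p s.
Proof. unfold Wf. pose proof (exp_pos s). nra. Qed.
Lemma D_der p (hp : 0 <= p <= 1) s : derivable_pt_lim (Df p) s (D1f p s).
Proof. apply is_derive_Reals. unfold Df, D1f. pose proof (W_pos p hp s). unfold Wf in *.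
 auto_derive. lra. field. lra. Qed.
Lemma D1_der p (hp : 0 <= p <= 1) s : derivable_pt_lim (D1f p) s (D2f p s).
Proof. apply is_derive_Reals. unfold D2f, D1f. pose proof (W_pos p hp s). unfold Wf in *.
 auto_derive. lra. field. lra. Qed.
Lemma D2_nonneg p (hp : 0 <= p <= 1) s : 0 <= D2f p s.
Proof. unfold D2f. pose proof (W_pos p hp s). pose proof (exp_pos s). unfold Wf in *.
 set (e := exp s) in *. assert (0 < (1-p+p*e)^2) by nra.
 replace (/ 4 - p * (1 - p) * e / (1 - p + p * e) ^ 2) with (((1-p) - p*e)^2 / (4 * (1 - p + p * e) ^ 2)) by (field; lra).
 apply Rdiv_le_0_compat. apply pow2_ge_0. lra. Qed.
Lemma D_0 p : Df p 0 = 0.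
Proof. unfold Df, Wf. rewrite exp_0. replace (1 - p + p*1) with 1 by ring. rewrite ln_1. field. Qed.
Lemma D1_0 p : D1f p 0 = 0.
Proof. unfold D1f, Wf. rewrite exp_0. replace (1 - p + p*1) with 1 by ring. field. Qed.
Lemma D1_sign p (hp : 0 <= p <= 1) s : (0 <= s -> 0 <= D1f p s) /\ (s <= 0 -> D1f p s <= 0).
Proof. split; intros Hs; destruct (Req_dec s 0) as [->|Hn]; try (rewrite D1_0; lra).
 - destruct (MVT_cor2 (D1f p) (D2f p) 0 s) as [c [Hc _]]. lra. intros; apply D1_der; auto.
   rewrite D1_0 in Hc. pose proof (D2_nonneg p hp c). nra.
 - destruct (MVT_cor2 (D1f p) (D2f p) s 0) as [c [Hc _]]. lra. intros; apply D1_der; auto.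
   rewrite D1_0 in Hc. pose proof (D2_nonneg p hp c). nra.
Qed.
Lemma D_nonneg p (hp : 0 <= p <= 1) s : 0 <= Df p s.
Proof. destruct (Req_dec s 0) as [->|Hn]; [rewrite D_0; lra|].
 destruct (Rle_or_lt 0 s).
 - destruct (MVT_cor2 (Df p) (D1f p) 0 s) as [c [Hc Hc2]]. lra. intros; apply D_der; auto.
   rewrite D_0 in Hc. pose proof (proj1 (D1_sign p hp c)). nra.
 - destruct (MVT_cor2 (Df p) (D1f p) s 0) as [c [Hc Hc2]]. lra. intros; apply D_der; auto.
   rewrite D_0 in Hc. pose proof (proj2 (D1_sign p hp c)). nra.
Qed.
Lemma hoeffding p (hp : 0 <= p <= 1) s : (1-p)*exp(-p*s) + p*exp((1-p)*s) <= exp(s^2/8).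
Proof. pose proof (D_nonneg p hp s). unfold Df in H. pose proof (W_pos p hp s).
 assert (ln (Wf p s) <= s^2/8 + p*s) by lra.
 replace ((1-p)*exp(-p*s) + p*exp((1-p)*s)) with (Wf p s * exp (-p*s)).
 2:{ unfold Wf. replace ((1-p)*s) with (s + -p*s) by ring. rewrite exp_plus. ring. }
 replace (s^2/8) with ((s^2/8 + p*s) + -p*s) by ring. rewrite exp_plus.
 apply Rmult_le_compat_r. left; apply exp_pos.
 rewrite <- (exp_ln (Wf p s)) by auto. destruct H1. left; apply exp_increasing; auto. rewrite H1; lra.
Qed.

Definition Aq N q (x : nat -> R) := rsum N (fun i => q i * exp (-2 * (x i) ^ 2)).
Definition Bq N q (x : nat -> R) := rsum N (fun i => q i * exp (-2 * (1 - x i) ^ 2)).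
Definition fv N q x := / 2 - / 4 * ln (Aq N q x / Bq N q x).

Lemma Aq_pos N q x : prob_vec N q -> 0 < Aq N q x.
Proof. intros [H1 H2]. apply rsum_pos; auto. intros; apply exp_pos. lra. Qed.
Lemma Bq_pos N q x : prob_vec N q -> 0 < Bq N q x.
Proof. intros [H1 H2]. apply rsum_pos; auto. intros; apply exp_pos. lra. Qed.

Lemma hoef2 f x : 0 <= f <= 1 ->
  (1-f) * exp (2*f^2 - 2*x^2) + f * exp (2*(1-f)^2 - 2*(1-x)^2) <= 1.
Proof. intros hf. pose proof (hoeffding f hf (4*(x-f))).
 set (s := 4*(x-f)) in *.
 replace (2*f^2 - 2*x^2) with (-f*s + - (s^2/8)) by (unfold s; field).
 replace (2*(1-f)^2 - 2*(1-x)^2) with ((1-f)*s + - (s^2/8)) by (unfold s; field).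
 rewrite !exp_plus. 
 replace ((1 - f) * (exp (- f * s) * exp (- (s ^ 2 / 8))) + f * (exp ((1 - f) * s) * exp (- (s ^ 2 / 8))))
  with (exp (- (s ^ 2 / 8)) * ((1 - f) * exp (- f * s) + f * exp ((1 - f) * s))) by ring.
 apply Rle_trans with (exp (- (s ^ 2 / 8)) * exp (s^2/8)).
 apply Rmult_le_compat_l; auto. left; apply exp_pos.
 rewrite <- exp_plus. replace (- (s ^ 2 / 8) + s^2/8) with 0 by field. rewrite exp_0; lra.
Qed.

Lemma mix_pt N q x : prob_vec N q -> (forall i, (i < N)%nat -> 0 <= x i <= 1) ->
  0 <= fv N q x <= 1 /\ Aq N q x <= exp (-2 * (fv N q x)^2) /\ Bq N q x <= exp (-2 * (1 - fv N q x)^2).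
Proof. intros Hq Hx. pose proof (Aq_pos N q x Hq) as HA. pose proof (Bq_pos N q x Hq) as HB.
 destruct Hq as [Hq0 Hq1].
 set (A := Aq N q x) in *. set (B := Bq N q x) in *.
 assert (H1 : exp (-2) * B <= A).
 { unfold A, B, Aq, Bq. rewrite <- rsum_scal. apply rsum_le; intros i Hi.
   specialize (Hx i Hi). specialize (Hq0 i Hi).
   rewrite Rmult_comm, Rmult_assoc. apply Rmult_le_compat_l; auto.
   rewrite <- exp_plus. destruct (Req_dec (-2 * (1 - x i) ^ 2 + -2) (-2 * x i ^2)) as [e|e]. rewrite e; lra.
   left; apply exp_increasing. nra. }
 assert (H2 : A <= exp 2 * B).
 { unfold A, B, Aq, Bq. rewrite <- rsum_scal. apply rsum_le; intros i Hi.
   specialize (Hx i Hi). specialize (Hq0 i Hi).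
   rewrite (Rmult_comm (exp 2)), Rmult_assoc. apply Rmult_le_compat_l; auto.
   rewrite <- exp_plus. destruct (Req_dec (-2 * (1 - x i) ^ 2 + 2) (-2 * x i ^2)) as [e|e]. rewrite e; lra.
   left; apply exp_increasing. nra. }
 assert (Hr : 0 < A / B) by (apply Rdiv_lt_0_compat; auto).
 assert (Hl1 : ln (A/B) <= 2).
 { rewrite <- (ln_exp 2). apply ln_le; auto. apply Rmult_le_reg_r with B; auto.
   unfold Rdiv. rewrite Rmult_assoc, Rinv_l by lra. lra. }
 assert (Hl2 : -2 <= ln (A/B)).
 { rewrite <- (ln_exp (-2)). apply ln_le. apply exp_pos. apply Rmult_le_reg_r with B; auto.
   unfold Rdiv. rewrite Rmult_assoc, Rinv_l by lra. lra. }
 fold (fv N q x) in *. unfold fv in *. fold A B.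
 set (f := / 2 - / 4 * ln (A / B)).
 assert (hf : 0 <= f <= 1) by (unfold f; lra).
 assert (HAB : A = B * exp (2 - 4*f)).
 { replace (2 - 4*f) with (ln (A/B)) by (unfold f; field). rewrite exp_ln by auto. field. lra. }
 assert (Hs : (1-f) * exp (2*f^2) * A + f * exp (2*(1-f)^2) * B <= 1).
 { apply Rle_trans with (rsum N (fun i => q i)); [|right; exact Hq1].
   unfold A, B, Aq, Bq. rewrite <- !rsum_scal, <- rsum_plus.
   apply rsum_le; intros i Hi. specialize (Hq0 i Hi). pose proof (hoef2 f (x i) hf).
   replace ((1 - f) * exp (2 * f ^ 2) * (q i * exp (-2 * x i ^ 2)) + f * exp (2 * (1 - f) ^ 2) * (q i * exp (-2 * (1 - x i) ^ 2)))
   with (q i * ((1-f) * exp (2*f^2 + -2 * x i^2) + f * exp (2*(1-f)^2 + -2 * (1 - x i)^2))) by (rewrite !exp_plus; ring).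
   rewrite <- (Rmult_1_r (q i)) at 2. apply Rmult_le_compat_l; auto.
   replace (2*f^2 + -2 * x i^2) with (2*f^2 - 2*x i^2) by ring.
   replace (2*(1-f)^2 + -2 * (1 - x i)^2) with (2*(1-f)^2 - 2*(1-x i)^2) by ring. auto. }
 rewrite HAB in Hs.
 replace ((1 - f) * exp (2 * f ^ 2) * (B * exp (2 - 4 * f)) + f * exp (2 * (1 - f) ^ 2) * B)
   with (B * exp (2 * (1-f)^2)) in Hs.
 2:{ replace (exp (2 * (1-f)^2)) with (exp (2 * f ^ 2) * exp (2 - 4 * f)). ring.
     rewrite <- exp_plus. f_equal. ring. }
 assert (HB' : B <= exp (-2 * (1 - f) ^ 2)).
 { replace (exp (-2 * (1 - f) ^ 2)) with (/ exp (2 * (1-f)^2)) by (rewrite <- exp_Ropp; f_equal; ring).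
   pose proof (exp_pos (2 * (1-f)^2)). apply Rmult_le_reg_r with (exp (2 * (1 - f) ^ 2)); auto.
   rewrite Rinv_l by lra. lra. }
 split; auto. split; auto.
 rewrite HAB. replace (-2 * f^2) with (-2 * (1 - f) ^ 2 + (2 - 4*f)) by ring. rewrite exp_plus.
 apply Rmult_le_compat_r; auto. left; apply exp_pos.
Qed.

Lemma ex_RInt_const_ext (f : R -> R) c a b : a <= b -> (forall x, a < x < b -> f x = c) -> ex_RInt f a b.
Proof. intros hab H. apply (ex_RInt_ext (fun _ => c)). intros x Hx. rewrite Rmin_left, Rmax_right in Hx by lra.
 symmetry; auto. apply ex_RInt_const. Qed.

Lemma upset_int (P : R -> Prop) (Pd : forall u, {P u} + {~ P u}) a b :
  (forall u v, P u -> u <= v -> P v) -> a <= b ->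
  ex_RInt (fun u => if Pd u then 1 else 0) a b.
Proof. intros Hup hab.
 set (E := fun u => u = a \/ (a <= u <= b /\ ~ P u)).
 destruct (completeness E) as [c [Hc1 Hc2]].
 { exists b. intros x [->|[Hx _]]; lra. }
 { exists a. left; auto. }
 assert (hac : a <= c) by (apply Hc1; left; auto).
 assert (hcb : c <= b) by (apply Hc2; intros x [->|[Hx _]]; lra).
 apply ex_RInt_Chasles with c.
 - apply ex_RInt_const_ext with 0; auto. intros u Hu. destruct (Pd u) as [p|p]; auto.
   exfalso. assert (c <= u). { apply Hc2. intros e [->|[He Hn]]. lra.
     destruct (Rle_or_lt e u); auto. exfalso; apply Hn. apply Hup with u; auto; lra. }
   lra.
 - apply ex_RInt_const_ext with 1; auto. intros u Hu. destruct (Pd u) as [p|p]; auto.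
   exfalso. assert (u <= c) by (apply Hc1; right; split; [lra|auto]). lra.
Qed.

Lemma ex_RInt_rsum N (h : nat -> R -> R) a b : (forall i, (i < N)%nat -> ex_RInt (h i) a b) ->
  ex_RInt (fun u => rsum N (fun i => h i u)) a b.
Proof. induction N; intros H; simpl.
 - apply ex_RInt_const.
 - apply (ex_RInt_plus (V := R_NormedModule) (fun u => rsum N (fun i => h i u)) (h N)).
   apply IHN; intros; apply H; lia. apply H; lia.
Qed.

Definition T N y := rsum N (fun k => if Rle_dec (INR (S k)) y then 1 else 0).

Lemma rsum_S n f : rsum (S n) f = rsum n f + f n.
Proof. reflexivity. Qed.

Lemma T_le N y : T N y <= INR N.
Proof. induction N; unfold T in *; rewrite ?rsum_S; [simpl; lra|]. rewrite S_INR. destruct (Rle_dec _ _); lra. Qed.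

Lemma T_bounds N y : (INR N <= y -> T N y = INR N) /\ (y < INR N -> y - 1 < T N y) /\ (0 <= y -> T N y <= y).
Proof. induction N; unfold T in *; rewrite ?rsum_S.
 - simpl; lra.
 - destruct IHN as [I1 [I2 I3]]. pose proof (T_le N y). unfold T in H. rewrite S_INR.
   destruct (Rle_dec (INR N + 1) y) as [h|h].
   + assert (INR N <= y) by lra. split; [intros; rewrite I1; auto; ring|]. split; [intros; lra|].
     intros; lra.
   + split; [intros; lra|]. split.
     * intros. destruct (Rle_or_lt (INR N) y). rewrite I1; auto; lra. pose proof (I2 H1); lra.
     * intros. rewrite Rplus_0_r. auto.
Qed.

Lemma mono_int (G : R -> R) a b : (forall u v, u <= v -> G u <= G v) -> (forall u, 0 <= G u <= 1) ->
  a <= b -> ex_RInt G a b.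
Proof. intros Hm Hb hab.
 set (s := fun (n : nat) u => / INR (S n) * rsum (S n) (fun k => if Rle_dec (INR (S k)) (INR (S n) * G u) then 1 else 0)).
 assert (Hs : forall n, is_RInt (s n) a b (RInt (s n) a b)).
 { intros n. apply (RInt_correct (V := R_CompleteNormedModule)).
   apply (ex_RInt_scal (V := R_NormedModule) (fun u => rsum (S n) (fun k => if Rle_dec (INR (S k)) (INR (S n) * G u) then 1 else 0))).
   apply (ex_RInt_rsum (S n) (fun k u => if Rle_dec (INR (S k)) (INR (S n) * G u) then 1 else 0)).
   intros i Hi. apply (upset_int (fun u => INR (S i) <= INR (S n) * G u) (fun u => Rle_dec _ _)); auto.
   intros u v Hu Huv. apply Rle_trans with (1 := Hu). apply Rmult_le_compat_l. apply pos_INR. auto. }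
 destruct (filterlim_RInt (V := R_CompleteNormedModule) s a b eventually _ (G : fct_UniformSpace R R_UniformSpace) _ Hs) as [If [_ HI]].
 2:{ exists If; exact HI. }
 apply filterlim_locally. intros eps.
 destruct (nfloor_ex (/ eps)) as [N HN]. left; apply Rinv_0_lt_compat, cond_pos.
 exists N. intros n Hn t. 
 change (Rabs (s n t - G t) < eps).
 pose proof (T_bounds (S n) (INR (S n) * G t)) as [T1 [T2 T3]]. fold (T (S n) (INR (S n) * G t)) in *.
 unfold s. fold (T (S n) (INR (S n) * G t)).
 assert (hn : 0 < INR (S n)) by (apply lt_0_INR; lia).
 assert (hN : INR N <= INR n) by (apply le_INR; auto).
 rewrite S_INR in *. pose proof (cond_pos eps) as he. pose proof (Hb t).
 assert (Hk : / (INR n + 1) < eps).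
 { apply Rlt_le_trans with (/ (/ eps)). apply Rinv_lt_contravar. apply Rmult_lt_0_compat; auto. apply Rinv_0_lt_compat; auto. lra.
   rewrite Rinv_inv; lra. }
 set (T0 := T (S n) ((INR n + 1) * G t)) in *.
 assert (Hlo : (INR n + 1) * G t - 1 < T0 /\ T0 <= (INR n + 1) * G t).
 { split. destruct (Rle_or_lt (INR n + 1) ((INR n + 1) * G t)). rewrite T1; auto; nra. apply T2; auto.
   apply T3. nra. }
 assert (E : / (INR n + 1) * T0 - G t = / (INR n + 1) * (T0 - (INR n + 1) * G t)) by (field; lra).
 rewrite E, Rabs_mult, Rabs_right by (left; apply Rinv_0_lt_compat; lra).
 apply Rle_lt_trans with (/ (INR n + 1) * 1); [|lra].
 apply Rmult_le_compat_l. left; apply Rinv_0_lt_compat; lra.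
 apply Rabs_le; lra.
Qed.

Definition cl a b u := Rmax a (Rmin b u).
Lemma cl_in a b u : a <= b -> a <= cl a b u <= b.
Proof. intros. unfold cl. unfold Rmax, Rmin. repeat destruct Rle_dec; lra. Qed.
Lemma cl_id a b u : a <= u <= b -> cl a b u = u.
Proof. intros. unfold cl. unfold Rmax, Rmin. repeat destruct Rle_dec; lra. Qed.
Lemma cl_mono a b u v : a <= b -> u <= v -> cl a b u <= cl a b v.
Proof. intros. unfold cl. unfold Rmax, Rmin. repeat destruct Rle_dec; lra. Qed.

Lemma Heav_0 x : x < 0 -> Heav x = 0.
Proof. unfold Heav; destruct Rlt_dec; lra. Qed.
Lemma Heav_1 x : 0 <= x -> Heav x = 1.
Proof. unfold Heav; destruct Rlt_dec; lra. Qed.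

Definition mono_on a b (F : R -> R) := (forall u, a <= u <= b -> 0 <= F u <= 1) /\
  (forall u v, a <= u -> u <= v -> v <= b -> F u <= F v).

Lemma crps_int F a b y : a <= y <= b -> mono_on a b F ->
  ex_RInt (fun u => (F u - Heav (u - y))^2) a b.
Proof. intros hy [Hb Hm].
 assert (hab : a <= b) by lra.
 apply ex_RInt_Chasles with y.
 - apply (ex_RInt_ext (fun u => (F (cl a b u))^2)).
   { intros x Hx. rewrite Rmin_left, Rmax_right in Hx by lra. rewrite cl_id by lra. rewrite Heav_0 by lra. match goal with |- ?l = ?r => change (@eq R l r) end. ring. }
   apply mono_int; [| |lra].
   + intros u v Huv. pose proof (cl_in a b u hab). pose proof (cl_in a b v hab).
     pose proof (cl_mono a b u v hab Huv). pose proof (Hm (cl a b u) (cl a b v) ltac:(lra) H1 ltac:(lra)).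
     pose proof (Hb (cl a b u) H). apply pow_incr; lra.
   + intros u. pose proof (Hb (cl a b u) (cl_in a b u hab)). split; [apply pow2_ge_0|]. 
     replace 1 with (1^2) by ring. apply pow_incr; lra.
 - set (G := fun u => 1 - (1 - F (cl a b u))^2).
   assert (HG : ex_RInt G y b).
   { apply mono_int; [| |lra].
     + intros u v Huv. unfold G. pose proof (cl_in a b u hab). pose proof (cl_in a b v hab).
       pose proof (cl_mono a b u v hab Huv). pose proof (Hm (cl a b u) (cl a b v) ltac:(lra) H1 ltac:(lra)).
       pose proof (Hb (cl a b v) H0). assert ((1 - F (cl a b v))^2 <= (1 - F (cl a b u))^2) by (apply pow_incr; lra). lra.
     + intros u. unfold G. pose proof (Hb (cl a b u) (cl_in a b u hab)). 
       assert (0 <= (1 - F (cl a b u))^2) by apply pow2_ge_0.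
       assert ((1 - F (cl a b u))^2 <= 1^2) by (apply pow_incr; lra). lra. }
   pose proof (ex_RInt_minus (V := R_NormedModule) (fun _ => 1) G y b (ex_RInt_const _ _ _) HG) as H.
   apply (ex_RInt_ext _ _ y b) with (2 := H).
   intros x Hx. rewrite Rmin_left, Rmax_right in Hx by lra. unfold G. rewrite cl_id by lra. rewrite Heav_1 by lra.
   change (@eq R (minus 1 (1 - (1 - F x) ^ 2)) ((F x - 1)^2)). unfold minus, plus, opp; simpl. ring.
Qed.

Lemma RInt_rsum N (h : nat -> R -> R) a b : (forall i, (i < N)%nat -> ex_RInt (h i) a b) ->
  RInt (fun u => rsum N (fun i => h i u)) a b = rsum N (fun i => RInt (h i) a b).
Proof. induction N; intros H; simpl.
 - rewrite RInt_const. apply Rmult_0_r.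
 - rewrite (RInt_plus (V := R_CompleteNormedModule) (fun u => rsum N (fun i => h i u)) (h N)).
   rewrite IHN. reflexivity. intros; apply H; lia.
   apply ex_RInt_rsum; intros; apply H; lia. apply H; lia.
Qed.

Lemma ex_RInt_lin (f : R -> R) al be a b : ex_RInt f a b -> ex_RInt (fun u => al * f u + be) a b.
Proof. intros H. apply (ex_RInt_plus (V := R_NormedModule) (fun u => al * f u) (fun _ => be)).
 apply (ex_RInt_scal (V := R_NormedModule) f a b al H). apply ex_RInt_const. Qed.

Lemma RInt_lin (f : R -> R) al be a b : ex_RInt f a b -> RInt (fun u => al * f u + be) a b = al * RInt f a b + be * (b - a).
Proof. intros H. rewrite (RInt_plus (V := R_CompleteNormedModule) (fun u => al * f u) (fun _ => be)).
 assert (E : RInt (fun u => al * f u) a b = al * RInt f a b) by exact (RInt_scal (V := R_CompleteNormedModule) f a b al H).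
 rewrite E. rewrite RInt_const.
 change (al * RInt f a b + (b - a) * be = al * RInt f a b + be * (b - a)). ring.
 apply (ex_RInt_scal (V := R_NormedModule) f a b al H). apply ex_RInt_const. Qed.

Lemma Fmix_mono a b N q Fs : prob_vec N q -> (forall i, (i < N)%nat -> mono_on a b (Fs i)) ->
  mono_on a b (Fmix N q Fs).
Proof. intros Hq HF. split.
 - intros u Hu. change (Fmix N q Fs u) with (fv N q (fun i => Fs i u)).
   apply mix_pt; auto. intros i Hi. apply (HF i Hi); auto.
 - intros u v h1 h2 h3. change (fv N q (fun i => Fs i u) <= fv N q (fun i => Fs i v)).
   unfold fv. 
   pose proof (Aq_pos N q (fun i => Fs i u) Hq). pose proof (Bq_pos N q (fun i => Fs i u) Hq).
   pose proof (Aq_pos N q (fun i => Fs i v) Hq). pose proof (Bq_pos N q (fun i => Fs i v) Hq).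
   destruct Hq as [Hq0 Hq1].
   assert (HA : Aq N q (fun i => Fs i v) <= Aq N q (fun i => Fs i u)).
   { apply rsum_le; intros i Hi. apply Rmult_le_compat_l; auto.
     destruct (HF i Hi) as [Hb Hm]. pose proof (Hb u ltac:(lra)). pose proof (Hb v ltac:(lra)).
     pose proof (Hm u v h1 h2 h3).
     destruct (Req_dec (Fs i u) (Fs i v)) as [e|e]. rewrite e; lra.
     left; apply exp_increasing. nra. }
   assert (HB : Bq N q (fun i => Fs i u) <= Bq N q (fun i => Fs i v)).
   { apply rsum_le; intros i Hi. apply Rmult_le_compat_l; auto.
     destruct (HF i Hi) as [Hb Hm]. pose proof (Hb u ltac:(lra)). pose proof (Hb v ltac:(lra)).
     pose proof (Hm u v h1 h2 h3).
     destruct (Req_dec (Fs i u) (Fs i v)) as [e|e]. rewrite e; lra.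
     left; apply exp_increasing. nra. }
   assert (ln (Aq N q (fun i => Fs i v) / Bq N q (fun i => Fs i v)) <= ln (Aq N q (fun i => Fs i u) / Bq N q (fun i => Fs i u))).
   { apply ln_le. apply Rdiv_lt_0_compat; auto.
     unfold Rdiv. apply Rmult_le_compat; auto; try lra. left; apply Rinv_0_lt_compat; auto.
     apply Rinv_le_contravar; auto. }
   lra.
Qed.

Lemma ln_le_exp x y : 0 < x -> x <= exp y -> ln x <= y.
Proof. intros. rewrite <- (ln_exp y). apply ln_le; auto. Qed.

Lemma main_ineq a b N q Fs y : a < b -> prob_vec N q -> (forall i, (i < N)%nat -> mono_on a b (Fs i)) ->
  a <= y <= b ->
  rsum N (fun i => q i * exp (- (2/(b-a)) * CRPS a b (Fs i) y)) <= exp (- (2/(b-a)) * CRPS a b (Fmix N q Fs) y).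
Proof. intros hab Hq HF hy.
 pose proof (Fmix_mono a b N q Fs Hq HF) as HFm.
 set (L := b - a). assert (hL : 0 < L) by (unfold L; lra).
 set (g := fun u => (Fmix N q Fs u - Heav (u - y))^2).
 set (gi := fun i u => (Fs i u - Heav (u - y))^2).
 assert (Igi : forall i, (i < N)%nat -> ex_RInt (gi i) a b) by (intros; apply crps_int; auto).
 assert (Ig : ex_RInt g a b) by (apply crps_int; auto).
 change (CRPS a b (Fmix N q Fs) y) with (RInt g a b).
 set (c := fun i => - (2 / L) * RInt (gi i) a b).
 change (rsum N (fun i => q i * exp (c i)) <= exp (- (2 / L) * RInt g a b)).
 set (S := rsum N (fun i => q i * exp (c i))).
 destruct Hq as [Hq0 Hq1].
 assert (HS : 0 < S) by (apply rsum_pos; auto; [intros; apply exp_pos | lra]).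
 set (p := fun i => q i * exp (c i) / S).
 assert (Hp0 : forall i, (i < N)%nat -> 0 <= p i).
 { intros i Hi. unfold p. apply Rdiv_le_0_compat; auto. apply Rmult_le_pos; auto. left; apply exp_pos. }
 assert (Hp1 : rsum N p = 1).
 { unfold p. rewrite (rsum_ext N _ (fun i => / S * (q i * exp (c i)))) by (intros; unfold Rdiv; ring).
   rewrite rsum_scal. fold S. field. lra. }
 set (rhs := fun u => 1 * rsum N (fun i => (-2 * p i) * gi i u + (- (p i * c i))) + ln S).
 assert (Hpt : forall u, a < u < b -> rhs u <= -2 * g u).
 { intros u Hu. unfold rhs.
   set (Ah := rsum N (fun i => q i * exp (-2 * gi i u))).
   assert (HAh : 0 < Ah) by (apply rsum_pos; auto; [intros; apply exp_pos | lra]).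
   assert (St1 : ln Ah <= -2 * g u).
   { pose proof (mix_pt N q (fun i => Fs i u) (conj Hq0 Hq1)) as [_ [HA HB]].
     { intros i Hi. apply (HF i Hi). lra. }
     unfold g, gi in *. change (Fmix N q Fs u) with (fv N q (fun i => Fs i u)).
     destruct (Rlt_dec (u - y) 0) as [h|h].
     - rewrite Heav_0 in * by auto. apply ln_le_exp; auto.
       unfold Ah. rewrite (rsum_ext N _ (fun i => q i * exp (-2 * (Fs i u)^2))).
       2:{ intros i Hi. rewrite Heav_0 by auto. do 3 f_equal. ring. }
       replace ((fv N q (fun i : nat => Fs i u) - 0) ^ 2) with ((fv N q (fun i : nat => Fs i u)) ^ 2) by ring. exact HA.
     - rewrite Heav_1 in * by lra. apply ln_le_exp; auto.
       unfold Ah. rewrite (rsum_ext N _ (fun i => q i * exp (-2 * (1 - Fs i u)^2))).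
       2:{ intros i Hi. rewrite Heav_1 by lra. do 3 f_equal. ring. }
       replace ((fv N q (fun i : nat => Fs i u) - 1) ^ 2) with ((1 - fv N q (fun i : nat => Fs i u)) ^ 2) by ring. exact HB. }
   assert (St2 : rsum N (fun i => p i * (-2 * gi i u - c i)) <= ln Ah - ln S).
   { rewrite <- ln_div by auto. rewrite <- (ln_exp (rsum N (fun i => p i * (-2 * gi i u - c i)))). apply ln_le. apply exp_pos.
     eapply Rle_trans. apply jensen_exp; auto.
     right. unfold Ah, Rdiv. rewrite Rmult_comm, <- rsum_scal. apply rsum_ext; intros i Hi.
     unfold p. replace (-2 * gi i u) with (c i + (-2 * gi i u - c i)) at 2 by ring. rewrite exp_plus.
     field. lra. }
   rewrite Rmult_1_l. rewrite (rsum_ext N _ (fun i => p i * (-2 * gi i u - c i))) by (intros; ring). lra. }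
 assert (Hrhs : ex_RInt rhs a b).
 { unfold rhs. apply ex_RInt_lin. apply (ex_RInt_rsum N (fun i u => (-2 * p i) * gi i u + (- (p i * c i)))).
   intros; apply ex_RInt_lin; auto. }
 assert (Hlhs : ex_RInt (fun u => -2 * g u + 0) a b) by (apply ex_RInt_lin; auto).
 pose proof (RInt_le rhs (fun u => -2 * g u + 0) a b ltac:(lra) Hrhs Hlhs ltac:(intros x Hx; cbv beta; rewrite Rplus_0_r; apply Hpt; auto)) as HI.
 rewrite RInt_lin in HI by auto.
 unfold rhs in HI. rewrite RInt_lin in HI.
 2:{ apply (ex_RInt_rsum N (fun i u => (-2 * p i) * gi i u + (- (p i * c i)))). intros; apply ex_RInt_lin; auto. }
 rewrite (RInt_rsum N (fun i u => (-2 * p i) * gi i u + (- (p i * c i)))) in HI.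
 2:{ intros; apply ex_RInt_lin; auto. }
 rewrite (rsum_ext N _ (fun i => 0 * p i)) in HI.
 2:{ intros i Hi. rewrite RInt_lin by auto. unfold c. fold L. field. lra. }
 rewrite rsum_scal in HI.
 assert (ln S <= - (2 / L) * RInt g a b).
 { apply Rmult_le_reg_l with L; auto. replace (L * (- (2 / L) * RInt g a b)) with (-2 * RInt g a b) by (field; lra).
   fold L in HI. lra. }
 rewrite <- (exp_ln S) by auto. destruct H. left; apply exp_increasing; auto. rewrite H; lra.
Qed.

Lemma rsum_lim {T} (F : (T -> Prop) -> Prop) {FF : Filter F} N (h : nat -> T -> R) m :
  (forall i, (i < N)%nat -> filterlim (h i) F (locally (m i))) ->
  filterlim (fun u => rsum N (fun i => h i u)) F (locally (rsum N m)).
Proof. induction N; intros H; simpl.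
 - apply filterlim_const.
 - eapply (filterlim_comp_2 (fun u => rsum N (fun i => h i u)) (h N) Rplus).
   apply IHN; intros; apply H; lia. apply H; lia.
   apply (filterlim_plus (V := R_NormedModule) (rsum N m) (m N)).
Qed.

Lemma cont_lim {T} (F : (T -> Prop) -> Prop) {FF : Filter F} (phi : R -> R) (h : T -> R) l :
  continuous phi l -> filterlim h F (locally l) -> filterlim (fun u => phi (h u)) F (locally (phi l)).
Proof. intros Hc Hh. eapply filterlim_comp; eauto. Qed.

Lemma cont_R (phi : R -> R) (x : R) : ex_derive phi x -> @continuous R_UniformSpace R_UniformSpace phi x.
Proof. intros H. apply (ex_derive_continuous (K:=R_AbsRing) (V:=R_NormedModule)). exact H. Qed.

Lemma Fmix_lim {T} (F : (T -> Prop) -> Prop) {FF : Filter F} N q (Fs : nat -> T -> R) l :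
  prob_vec N q -> (forall i, (i < N)%nat -> filterlim (Fs i) F (locally (l i))) ->
  filterlim (fun u => fv N q (fun i => Fs i u)) F (locally (fv N q l)).
Proof. intros Hq H.
 pose proof (Aq_pos N q l Hq) as HA. pose proof (Bq_pos N q l Hq) as HB.
 assert (LA : filterlim (fun u => Aq N q (fun i => Fs i u)) F (locally (Aq N q l))).
 { apply (rsum_lim F N (fun i u => q i * exp (-2 * (Fs i u)^2))). intros i Hi.
   apply (cont_lim F (fun x => q i * exp (-2 * x^2))). apply cont_R. auto_derive. auto. auto. }
 assert (LB : filterlim (fun u => Bq N q (fun i => Fs i u)) F (locally (Bq N q l))).
 { apply (rsum_lim F N (fun i u => q i * exp (-2 * (1 - Fs i u)^2))). intros i Hi.
   apply (cont_lim F (fun x => q i * exp (-2 * (1 - x)^2))). apply cont_R. auto_derive. auto. auto. }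
 assert (LBi : filterlim (fun u => / Bq N q (fun i => Fs i u)) F (locally (/ Bq N q l))).
 { apply (cont_lim F Rinv). apply cont_R. auto_derive. lra. auto. }
 assert (LR : filterlim (fun u => Aq N q (fun i => Fs i u) * / Bq N q (fun i => Fs i u)) F (locally (Aq N q l * / Bq N q l))).
 { apply (filterlim_comp_2 _ _ Rmult LA LBi). apply (filterlim_mult (K := R_AbsRing)). }
 unfold fv. apply (cont_lim F (fun x => / 2 - / 4 * ln x)).
 apply cont_R. auto_derive. apply Rdiv_lt_0_compat; auto. exact LR.
Qed.

Lemma pdf_mono a b F : is_pdf a b F -> mono_on a b F.
Proof. intros [H1 [H2 _]]. split; auto. Qed.

Lemma Fmix_pdf a b N q Fs : a < b -> prob_vec N q -> (forall i, (i < N)%nat -> is_pdf a b (Fs i)) ->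
  is_pdf a b (Fmix N q Fs).
Proof. intros hab Hq HF.
 assert (HM : mono_on a b (Fmix N q Fs)) by (apply Fmix_mono; auto; intros; apply pdf_mono; auto).
 destruct HM as [HM1 HM2]. destruct Hq as [Hq0 Hq1].
 split; [auto|]. split; [auto|]. split; [|split; [|split]].
 - change (fv N q (fun i => Fs i a) = 0). unfold fv, Aq, Bq.
   rewrite (rsum_ext N _ (fun i => 1 * q i)).
   2:{ intros i Hi. destruct (HF i Hi) as [_ [_ [E _]]]. rewrite E. replace (-2 * 0^2) with 0 by ring. rewrite exp_0. ring. }
   rewrite (rsum_ext N (fun i => q i * exp (-2 * (1 - Fs i a) ^ 2)) (fun i => exp (-2) * q i)).
   2:{ intros i Hi. destruct (HF i Hi) as [_ [_ [E _]]]. rewrite E. replace (-2 * (1 - 0)^2) with (-2) by ring. ring. }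
   rewrite !rsum_scal, Hq1. replace (1 * 1 / (exp (-2) * 1)) with (exp 2).
   rewrite ln_exp. field. replace (-2) with (- (2)) by ring. rewrite exp_Ropp. field. apply Rgt_not_eq, exp_pos.
 - change (fv N q (fun i => Fs i b) = 1). unfold fv, Aq, Bq.
   rewrite (rsum_ext N _ (fun i => exp (-2) * q i)).
   2:{ intros i Hi. destruct (HF i Hi) as [_ [_ [_ [E _]]]]. rewrite E. replace (-2 * 1^2) with (-2) by ring. ring. }
   rewrite (rsum_ext N (fun i => q i * exp (-2 * (1 - Fs i b) ^ 2)) (fun i => 1 * q i)).
   2:{ intros i Hi. destruct (HF i Hi) as [_ [_ [_ [E _]]]]. rewrite E. replace (-2 * (1 - 1)^2) with 0 by ring. rewrite exp_0. ring. }
   rewrite !rsum_scal, Hq1. replace (exp (-2) * 1 / (1 * 1)) with (exp (-2)) by field.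
   rewrite ln_exp. field.
 - intros x Hx. change (filterlim (fun u => fv N q (fun i => Fs i u)) (at_left x) (locally (fv N q (fun i => Fs i x)))).
   apply (Fmix_lim (at_left x) N q Fs (fun i => Fs i x)). split; auto.
   intros i Hi. destruct (HF i Hi) as [_ [_ [_ [_ [E _]]]]]. apply E; auto.
 - intros x Hx.
   assert (HQ : forall i, exists l, (i < N)%nat -> filterlim (Fs i) (at_right x) (locally l)).
   { intros i. destruct (Compare_dec.lt_dec i N) as [Hi|Hi].
     + destruct (HF i Hi) as [_ [_ [_ [_ [_ E]]]]]. destruct (E x Hx) as [l Hl]. exists l; auto.
     + exists 0. intros; lia. }
   set (l := fun i => proj1_sig (constructive_indefinite_description _ (HQ i))).
   exists (fv N q l).
   apply (Fmix_lim (at_right x) N q Fs l). split; auto.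
   intros i Hi. unfold l. destruct (constructive_indefinite_description _ (HQ i)) as [li Hli]. simpl. auto.
Qed.

Theorem theorem2 (a b : R) (hab : a < b) :
  mixable (is_pdf a b) (fun y => a <= y <= b) (CRPS a b) (2 / (b - a)) /\
  (forall (N : nat) (Fs : nat -> R -> R) (q : nat -> R),
     (1 <= N)%nat ->
     (forall i, (i < N)%nat -> is_pdf a b (Fs i)) ->
     prob_vec N q ->
     is_pdf a b (Fmix N q Fs) /\
     forall y, a <= y <= b ->
       exp (- (2 / (b - a)) * CRPS a b (Fmix N q Fs) y)
       >= rsum N (fun i => q i * exp (- (2 / (b - a)) * CRPS a b (Fs i) y))).
Proof.
 split.
 - intros N q c Hq Hc. exists (Fmix N q c). split. apply Fmix_pdf; auto.
   intros y Hy. pose proof (main_ineq a b N q c y hab Hq ltac:(intros; apply pdf_mono; auto) Hy) as H.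
   destruct Hq as [Hq0 Hq1].
   set (S := rsum N (fun i => q i * exp (- (2 / (b - a)) * CRPS a b (c i) y))) in *.
   assert (HS : 0 < S) by (apply rsum_pos; auto; [intros; apply exp_pos | lra]).
   assert (ln S <= - (2 / (b - a)) * CRPS a b (Fmix N q c) y).
   { rewrite <- (ln_exp (- (2 / (b - a)) * CRPS a b (Fmix N q c) y)). apply ln_le; auto. }
   assert (0 < 2 / (b - a)) by (apply Rdiv_lt_0_compat; lra).
   apply Rmult_le_reg_l with (2 / (b - a)); auto.
   replace (2 / (b - a) * (- / (2 / (b - a)) * ln S)) with (- ln S) by (field; lra). lra.
 - intros N Fs q _ HF Hq. split. apply Fmix_pdf; auto.
   intros y Hy. apply Rle_ge. apply main_ineq; auto. intros; apply pdf_mono; auto.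
Qed.
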